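(* Let $f\colon A\to B$, $a\colon A\to A$ and $b\colon B\to B$ be morphisms in a pre-Hilbert $*$-category with $a\succ 0$ and $b\succ 0$. Then \[ f^*b^{-1}f\leq a \iff fa^{-1}f^*\leq b \qquad\text{and}\qquad f^*b^{-1}f\prec a \iff fa^{-1}f^*\prec b. \]
   Context: A $*$-category is a category with a choice of $f^*\colon Y\to X$ for each $f\colon X\to Y$ such that $1^*=1$, $(gf)^*=f^*g^*$, $(f^* )^*=f$. A pre-Hilbert $*$-category is a $*$-category with (R1) a zero object, (R2) orthonormal biproducts of all pairs of objects (biproducts $(X,s_1,r_1,s_2,r_2)$ with $r_k=s_k^*$), (R3) an isometric kernel (kernel $m$ with $m^*m=1$) for every morphism, and (R4) every diagonal $\Delta\colon X\to X\oplus X$ a kernel of some morphism; such a category is additive. For Hermitian endomorphisms ($c^*=c$) $c,d$ of an object $A$, $c\leq d$ means $d-c=y^*y$ for some object $Y$ and $y\colon A\to Y$; $c\prec d$ (also written $d\succ c$) means $c\leq d$ and $d-c$ is invertible. *)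

(* Defs.v *)
From HB Require Import structures.
From mathcomp Require Import all_boot all_algebra.
Set Implicit Arguments. Unset Strict Implicit. Unset Printing Implicit Defensive.
Import GRing.Theory.
Local Open Scope ring_scope.

(* A *-category whose arr-sets carry an abelian-group structure for which
   composition is bilinear (a pre-Hilbert
   *-category is additive, with a unique such enrichment). *)
Record StarCat := {
  ob :> Type;
  arr : ob -> ob -> zmodType;
  cc : forall X Y Z : ob, arr Y Z -> arr X Y -> arr X Z;
  idm : forall X : ob, arr X X;
  dag : forall X Y : ob, arr X Y -> arr Y X;
  compA : forall X Y Z W (h : arr Z W) (g : arr Y Z) (f : arr X Y),
      cc h (cc g f) = cc (cc h g) f;
  comp1f : forall X Y (f : arr X Y), cc (idm Y) f = f;
  compf1 : forall X Y (f : arr X Y), cc f (idm X) = f;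
  compDl : forall X Y Z (g1 g2 : arr Y Z) (f : arr X Y),
      cc (g1 + g2) f = cc g1 f + cc g2 f;
  compDr : forall X Y Z (g : arr Y Z) (f1 f2 : arr X Y),
      cc g (f1 + f2) = cc g f1 + cc g f2;
  star1 : forall X, dag (idm X) = idm X;
  starM : forall X Y Z (g : arr Y Z) (f : arr X Y),
      dag (cc g f) = cc (dag f) (dag g);
  starK : forall X Y (f : arr X Y), dag (dag f) = f
}.

Arguments cc {s X Y Z}.
Arguments idm {s}.
Arguments dag {s X Y}.

Section Defs.
Variable C : StarCat.

Definition is_zero_ob (Z : C) : Prop :=
  forall X : C, (exists f : arr X Z, forall g, g = f) /\
                (exists f : arr Z X, forall g, g = f).

Definition is_biproduct (X Y P : C) (s1 : arr X P) (r1 : arr P X)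
  (s2 : arr Y P) (r2 : arr P Y) : Prop :=
  (forall W (f1 : arr W X) (f2 : arr W Y),
      exists! h : arr W P, cc r1 h = f1 /\ cc r2 h = f2) /\
  (forall W (g1 : arr X W) (g2 : arr Y W),
      exists! h : arr P W, cc h s1 = g1 /\ cc h s2 = g2) /\
  cc r1 s1 = idm X /\ cc r2 s2 = idm Y /\
  cc r1 s2 = 0 /\ cc r2 s1 = 0.

Definition is_orthonormal_biproduct (X Y P : C) (s1 : arr X P) (r1 : arr P X)
  (s2 : arr Y P) (r2 : arr P Y) : Prop :=
  is_biproduct s1 r1 s2 r2 /\ r1 = dag s1 /\ r2 = dag s2.

Definition is_kernel (K X Y : C) (m : arr K X) (f : arr X Y) : Prop :=
  cc f m = 0 /\
  forall W (g : arr W X), cc f g = 0 -> exists! h : arr W K, cc m h = g.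

Definition preHilbert : Prop :=
  (exists Z : C, is_zero_ob Z) /\
  (forall X Y : C, exists (P : C) (s1 : arr X P) (r1 : arr P X)
       (s2 : arr Y P) (r2 : arr P Y), is_orthonormal_biproduct s1 r1 s2 r2) /\
  (forall (X Y : C) (f : arr X Y), exists (K : C) (m : arr K X),
       is_kernel m f /\ cc (dag m) m = idm K) /\
  (forall (X P : C) (s1 : arr X P) (r1 : arr P X) (s2 : arr X P) (r2 : arr P X),
      is_orthonormal_biproduct s1 r1 s2 r2 ->
      forall d : arr X P, cc r1 d = idm X -> cc r2 d = idm X ->
      exists (Y : C) (g : arr P Y), is_kernel d g).

Definition hermitian (A : C) (c : arr A A) : Prop := dag c = c.

Definition invertible (A B : C) (h : arr A B) : Prop :=
  exists g : arr B A, cc g h = idm A /\ cc h g = idm B.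

Definition is_inverse (A B : C) (h : arr A B) (g : arr B A) : Prop :=
  cc g h = idm A /\ cc h g = idm B.

Definition hle (A : C) (c d : arr A A) : Prop :=
  hermitian c /\ hermitian d /\
  exists (Y : C) (y : arr A Y), d - c = cc (dag y) y.

Definition hlt (A : C) (c d : arr A A) : Prop :=
  hle c d /\ invertible (d - c).

End Defs.

(* Main.v *)
Require Import Defs.
From mathcomp Require Import all_boot all_algebra.
Import GRing.Theory.
Local Open Scope ring_scope.
Set Implicit Arguments. Unset Strict Implicit.
Section S.
Variable C : StarCat.
Implicit Types X Y Z W A B : C.
Definition ccA := @Defs.compA C.

Lemma dbl0 (V : zmodType) (x : V) : x = x + x -> x = 0.
Proof. by move=> H; apply: (addrI x); rewrite addr0 -H. Qed.

Lemma comp0l X Y Z (f : arr X Y) : cc (0 : arr Y Z) f = 0.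
Proof. by apply: dbl0; rewrite -compDl addr0. Qed.
Lemma comp0r X Y Z (g : arr Y Z) : cc g (0 : arr X Y) = 0.
Proof. by apply: dbl0; rewrite -compDr addr0. Qed.
Lemma compNl X Y Z (g : arr Y Z) (f : arr X Y) : cc (- g) f = - cc g f.
Proof. by apply/eqP; rewrite -subr_eq0 opprK -compDl addNr comp0l. Qed.
Lemma compNr X Y Z (g : arr Y Z) (f : arr X Y) : cc g (- f) = - cc g f.
Proof. by apply/eqP; rewrite -subr_eq0 opprK -compDr addNr comp0r. Qed.
Lemma compBl X Y Z (g1 g2 : arr Y Z) (f : arr X Y) : cc (g1 - g2) f = cc g1 f - cc g2 f.
Proof. by rewrite compDl compNl. Qed.
Lemma compBr X Y Z (g : arr Y Z) (f1 f2 : arr X Y) : cc g (f1 - f2) = cc g f1 - cc g f2.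
Proof. by rewrite compDr compNr. Qed.

Hypothesis HB : forall X Y : C, exists (P : C) (s1 : arr X P) (r1 : arr P X)
       (s2 : arr Y P) (r2 : arr P Y), is_orthonormal_biproduct s1 r1 s2 r2.

Lemma dagD X Y (f g : arr X Y) : dag (f + g) = dag f + dag g.
Proof.
have [P [t1 [r1 [t2 [r2 [[U1 [U2 [e11 [e22 [e12 e21]]]]] [E1 E2]]]]]]] := HB Y Y.
subst r1 r2.
have [n [[n1 n2] _]] := U2 Y (idm Y) (idm Y).
have id : idm P = cc t1 (dag t1) + cc t2 (dag t2).
  have [h [_ uh]] := U1 P (dag t1) (dag t2).
  rewrite -(uh (idm P)); last by rewrite !compf1.
  by apply: uh; split; rewrite !compDr !ccA ?e11 ?e22 ?e12 ?e21 !comp0l !comp1f ?addr0 ?add0r.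
have -> : f + g = cc n (cc t1 f + cc t2 g).
  by rewrite compDr !ccA n1 n2 !comp1f.
have w1 : cc (dag (cc t1 f + cc t2 g)) t1 = dag f.
  by rewrite -[LHS]starK starM starK compDr !ccA e11 e12 comp1f comp0l addr0.
have w2 : cc (dag (cc t1 f + cc t2 g)) t2 = dag g.
  by rewrite -[LHS]starK starM starK compDr !ccA e21 e22 comp1f comp0l add0r.
rewrite starM -[dag (_ + _)]compf1 id compDr !ccA w1 w2 compDl.
by rewrite -!ccA -!starM n1 n2 !comp1f.
Qed.

Lemma dag0 X Y : dag (0 : arr X Y) = 0.
Proof. by apply: dbl0; rewrite -dagD addr0. Qed.
Lemma dagN X Y (f : arr X Y) : dag (- f) = - dag f.
Proof. by apply/eqP; rewrite -subr_eq0 opprK -dagD addNr dag0. Qed.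
Lemma dagB X Y (f g : arr X Y) : dag (f - g) = dag f - dag g.
Proof. by rewrite dagD dagN. Qed.

Lemma ccAA (X1 X2 X3 X4 X5 : C) (D : arr X4 X5) (U : arr X3 X4) (V : arr X2 X3) (E : arr X1 X2) :
  cc (cc D U) (cc V E) = cc D (cc (cc U V) E).
Proof. by rewrite !ccA. Qed.

Lemma invK1 X Y W (h : arr X Y) g : is_inverse h g -> forall (k : arr Y W), cc (cc k h) g = k.
Proof. by case=> _ e k; rewrite -ccA e compf1. Qed.
Lemma invK2 X Y W (h : arr X Y) g : is_inverse h g -> forall (k : arr X W), cc (cc k g) h = k.
Proof. by case=> e _ k; rewrite -ccA e compf1. Qed.

Lemma inv_herm A (a ainv : arr A A) : Defs.hermitian a -> is_inverse a ainv -> dag ainv = ainv.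
Proof.
move=> ha [e1 e2].
have e3 : cc (dag ainv) a = idm A by rewrite -ha -starM e2 star1.
by rewrite -[dag ainv]compf1 -e2 ccA e3 comp1f.
Qed.

Ltac norm := repeat progress rewrite ?compDl ?compDr ?compBl ?compBr ?compNl ?compNr ?ccA ?comp1f ?compf1.

Lemma sumsq B Y V P (p : arr B Y) (q : arr B V) (s1 : arr Y P) (s2 : arr V P) :
  cc (dag s1) s1 = idm Y -> cc (dag s2) s2 = idm V -> cc (dag s1) s2 = 0 -> cc (dag s2) s1 = 0 ->
  cc (dag (cc s1 p + cc s2 q)) (cc s1 p + cc s2 q) = cc (dag p) p + cc (dag q) q.
Proof.
move=> e11 e22 e12 e21.
rewrite dagD !starM !compDl !compDr !ccAA e11 e12 e21 e22.
by rewrite !comp0l !comp0r !comp1f addr0 add0r.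
Qed.

Lemma main_le A B (f : arr A B) a b ainv binv :
  Defs.hermitian a -> Defs.hermitian b -> is_inverse a ainv -> is_inverse b binv ->
  hle 0 b -> hle (cc (dag f) (cc binv f)) a -> hle (cc f (cc ainv (dag f))) b.
Proof.
move=> ha hb ia ib [_ [_ [V [v hv]]]] [_ [_ [Y [y hy]]]].
rewrite subr0 in hv.
have dai := inv_herm ha ia; have dbi := inv_herm hb ib.
have hh : dag (cc f (cc ainv (dag f))) = cc f (cc ainv (dag f)).
  by rewrite !starM starK dai ccA.
split; first exact: hh.
split => //.
have [P [s1 [r1 [s2 [r2 [[_ [_ [e11 [e22 [e12 e21]]]]] [E1 E2]]]]]]] := HB Y V.
subst r1 r2.
set h := cc f (cc ainv (dag f)).
set p := cc y (cc ainv (dag f)).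
set q := cc v (idm B - cc binv h).
exists P, (cc s1 p + cc s2 q).
have pp : cc (dag p) p = h - cc h (cc binv h).
  rewrite /p starM starM starK dai ccAA -hy. rewrite /h. norm. by rewrite !(invK1 ia).
have qq : cc (dag q) q = b - h - h + cc h (cc binv h).
  rewrite /q starM ccAA -hv dagB star1 starM dbi hh /h. norm.
  rewrite !(invK2 ib) (proj2 ib); norm. by rewrite opprK addrA.
rewrite sumsq // pp qq. set X := cc h (cc binv h).
by rewrite [RHS]addrC -!addrA [X + _]addrC subrK addNr addr0.
Qed.

Lemma main_inv A B (f : arr A B) a b ainv binv :
  is_inverse a ainv -> is_inverse b binv ->
  invertible (a - cc (dag f) (cc binv f)) -> invertible (b - cc f (cc ainv (dag f))).
Proof.
move=> ia ib [t [ts st]].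
set s := a - cc (dag f) (cc binv f) in ts st.
have e : cc (dag f) (cc binv f) = a - s by rewrite /s opprB addrC subrK.
have K1 : forall W (k : arr A W), cc (cc (cc (cc (cc k ainv) (dag f)) binv) f) t = cc k t - cc k ainv.
  move=> W k.
  have : cc (cc ainv (cc (dag f) (cc binv f))) t = t - ainv.
    by rewrite e compBr compBl (proj1 ia) comp1f -ccA st compf1.
  by move=> /(congr1 (cc k)); rewrite compBr !ccA.
have K2 : forall W (k : arr A W), cc (cc (cc (cc (cc k t) (dag f)) binv) f) ainv = cc k t - cc k ainv.
  move=> W k.
  have : cc t (cc (cc (dag f) (cc binv f)) ainv) = t - ainv.
    by rewrite e compBl compBr (proj2 ia) compf1 ccA ts comp1f.
  by move=> /(congr1 (cc k)); rewrite compBr !ccA.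
exists (binv + cc binv (cc f (cc t (cc (dag f) binv)))); split.
- norm. rewrite (proj1 ib) ?(invK2 ib) ?K2; norm.
  set Y := cc (cc (cc binv f) ainv) (dag f); set Z := cc (cc (cc binv f) t) (dag f).
  by rewrite opprB (addrC Y) addNKr subrK.
- norm. rewrite (proj2 ib) ?(invK1 ib) ?K1; norm.
  by rewrite opprB addKr addrK.
Qed.
End S.

Theorem proposition6p2 (C : StarCat) (HC : preHilbert C) (A B : C)
  (f : arr A B) (a : arr A A) (b : arr B B)
  (ha : hlt 0 a) (hb : hlt 0 b)
  (ainv : arr A A) (binv : arr B B)
  (hai : is_inverse a ainv) (hbi : is_inverse b binv) :
  (hle (cc (dag f) (cc binv f)) a <-> hle (cc f (cc ainv (dag f))) b) /\
  (hlt (cc (dag f) (cc binv f)) a <-> hlt (cc f (cc ainv (dag f))) b).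
Proof.
have HB := proj1 (proj2 HC).
have [hla _] := ha; have [hlb _] := hb.
have [_ [haa _]] := hla; have [_ [hbb _]] := hlb.
have L1 : hle (cc (dag f) (cc binv f)) a -> hle (cc f (cc ainv (dag f))) b.
  exact: main_le.
have L2 : hle (cc f (cc ainv (dag f))) b -> hle (cc (dag f) (cc binv f)) a.
  by move=> H; have := @main_le C HB B A (dag f) b a binv ainv hbb haa hbi hai hla; rewrite !starK; apply.
have I1 := @main_inv C A B f a b ainv binv hai hbi.
have I2 : invertible (b - cc f (cc ainv (dag f))) -> invertible (a - cc (dag f) (cc binv f)).
  by move=> H; have := @main_inv C B A (dag f) b a binv ainv hbi hai; rewrite !starK; apply.
split; split.
- exact: L1.
- exact: L2.
- by case=> H1 H2; split; [apply: L1 | apply: I1].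
- by case=> H1 H2; split; [apply: L2 | apply: I2].
Qed.
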